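(* Let $q$ be a prime power, let $\mathbb{F}_q \subset \mathbb{F}_{q^m} \subset \mathbb{L}$ be finite fields with $[\mathbb{L}:\mathbb{F}_{q^m}] = u > 1$, and let $k,n,w$ be integers with $u<k<n\le m$ and $n-k > w > \lfloor (n-k)/2 \rfloor$. Let $\mathbf{g}\in\mathbb{F}_{q^m}^n$ with $\|\mathbf{g}\|_q = n$ and let $\mathbf{G}\in\mathbb{F}_{q^m}^{k\times n}$ be the matrix whose $i$-th row is $(g_1^{q^{i-1}},\dots,g_n^{q^{i-1}})$, $i=1,\dots,k$. Let $\mathbf{x}\in\mathbb{L}^k$ be such that $x_{k-u+1},\dots,x_k$ form a basis of $\mathbb{L}$ over $\mathbb{F}_{q^m}$, let $\mathbf{s}\in\mathbb{L}^w$ with $\|\mathbf{s}\|_q = w$, let $\mathbf{P}\in\mathrm{GL}_n(\mathbb{F}_q)$, set $\mathbf{z} = (\mathbf{s}\mid\mathbf{0})\mathbf{P}^{-1}$ and $\mathbf{K}=\mathbf{x}\mathbf{G}+\mathbf{z}$. Let $\gamma_1,\dots,\gamma_u$ be a basis of $\mathbb{L}$ over $\mathbb{F}_{q^m}$, and for $i=1,\dots,u$ set $\mathbf{K}_i = \mathrm{Tr}_{\mathbb{L}/\mathbb{F}_{q^m}}(\gamma_i\mathbf{K})$ and $\mathbf{b}_i = (\mathrm{Tr}_{\mathbb{L}/\mathbb{F}_{q^m}}(\gamma_i\mathbf{s})\mid\mathbf{0})\in\mathbb{F}_{q^m}^n$. Let $\mathcal{C}_{\mathrm{pub}} = \mathcal{G}_k(\mathbf{g})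 + \sum_{i=1}^u \mathbb{F}_{q^m}\mathbf{K}_i$ and $\mathcal{B} = \sum_{i=1}^u \mathbb{F}_{q^m}\mathbf{b}_i$, both subspaces of $\mathbb{F}_{q^m}^n$. Let $f = n-w-k-1$ and assume $\dim_{\mathbb{F}_{q^m}}\Lambda_f(\mathcal{B}) = w$. Then: (1) the dual code $\Lambda_f(\mathcal{C}_{\mathrm{pub}})^{\perp}$ has dimension $1$ and is generated by $(\mathbf{0}\mid\mathbf{h})\mathbf{P}^T$ for some $\mathbf{h}\in\mathbb{F}_{q^m}^{n-w}$ with $\|\mathbf{h}\|_q = n-w$; (2) for every nonzero $\widetilde{\mathbf{h}}\in\Lambda_f(\mathcal{C}_{\mathrm{pub}})^{\perp}$ and every $\mathbf{T}\in\mathrm{GL}_n(\mathbb{F}_q)$ such that $\widetilde{\mathbf{h}}(\mathbf{T}^{-1})^T = (\mathbf{0}\mid\mathbf{h}')$ for some $\mathbf{h}'\in\mathbb{F}_{q^m}^{n-w}$ (the first $w$ entries being zero), there exists $\mathbf{z}^*\in\mathbb{L}^w$ with $\|\mathbf{z}^*\|_q = w$ such that $\mathbf{z}\mathbf{T} = (\mathbf{z}^*\mid\mathbf{0})$.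
   Context: The rank weight $\|\mathbf{y}\|_q$ of a vector with entries in an extension of $\mathbb{F}_q$ is the dimension of the $\mathbb{F}_q$-span of its entries. Maps (trace, Frobenius) are applied componentwise to vectors. $\mathcal{G}_k(\mathbf{g})$ denotes the Gabidulin code, the $\mathbb{F}_{q^m}$-span of the rows $(g_1^{q^{i}},\dots,g_n^{q^{i}})$, $i=0,\dots,k-1$. For a subspace $U\subseteq\mathbb{F}_{q^m}^n$, $U^{q^j}=\{(u_1^{q^j},\dots,u_n^{q^j}):\mathbf{u}\in U\}$ and $\Lambda_i(U) = U+U^q+\cdots+U^{q^i}$. The dual of a code $\mathcal{C}\subseteq\mathbb{F}_{q^m}^n$ is $\mathcal{C}^\perp=\{\mathbf{y}\in\mathbb{F}_{q^m}^n : \sum_{j=1}^n c_jy_j = 0 \text{ for all } \mathbf{c}\in\mathcal{C}\}$. $(\mathbf{a}\mid\mathbf{b})$ denotes concatenation. *)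

(* Defs.v *)
(* F = F_q (a finite field), L a finite-dimensional field
   extension of F (hence a finite field), E : {subfield L} plays F_{q^m}. *)
From HB Require Import structures.
From mathcomp Require Import all_boot all_order all_algebra all_field.
Set Implicit Arguments. Unset Strict Implicit. Unset Printing Implicit Defensive.
Import GRing.Theory.
Local Open Scope ring_scope.

Section Defs.
Variables (F : finFieldType) (L : fieldExtType F).

Definition qF : nat := #|F|.

Definition entries n (v : 'rV[L]_n) : seq L := [seq v 0 j | j <- enum 'I_n].

Definition rank_weight n (v : 'rV[L]_n) : nat := \dim <<entries v>>%VS.

Definition rv_nth n (v : 'rV[L]_n) (i : nat) : L :=
  if insub i is Some j then v 0 j else 0.

Definition pad_right w n (s : 'rV[L]_w) : 'rV[L]_n := \row_(j < n) rv_nth s j.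

Definition pad_left w n (h : 'rV[L]_(n - w)) : 'rV[L]_n :=
  \row_(j < n) (if (j < w)%N then 0 else rv_nth h (j - w)).

Definition liftF n (P : 'M[F]_n) : 'M[L]_n := map_mx (in_alg L) P.

Definition frobv n (j : nat) (v : 'rV[L]_n) : 'rV[L]_n :=
  map_mx (fun a => a ^+ (qF ^ j)) v.

Definition trace_ext (m u : nat) (a : L) : L := \sum_(i < u) a ^+ (qF ^ (m * i)).

Definition gab_mx k n (g : 'rV[L]_n) : 'M[L]_(k, n) :=
  \matrix_(i < k, j < n) g 0 j ^+ (qF ^ i).

Variable E : {subfield L}.

Definition inFqm n (v : 'rV[L]_n) : Prop := forall j, v 0 j \in E.

Definition Espan (I : finType) n (vs : I -> 'rV[L]_n) : 'rV[L]_n -> Prop :=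
  fun v => exists c : I -> L, (forall i, c i \in E) /\ v = \sum_i c i *: vs i.

Definition sumset n (U V : 'rV[L]_n -> Prop) : 'rV[L]_n -> Prop :=
  fun v => exists a b, U a /\ V b /\ v = a + b.

Definition Lambda n (f : nat) (U : 'rV[L]_n -> Prop) : 'rV[L]_n -> Prop :=
  fun v => exists us : 'I_f.+1 -> 'rV[L]_n,
    (forall j, U (us j)) /\ v = \sum_(j < f.+1) frobv j (us j).

Definition dual n (U : 'rV[L]_n -> Prop) : 'rV[L]_n -> Prop :=
  fun y => inFqm y /\ forall c, U c -> \sum_(j < n) c 0 j * y 0 j = 0.

Definition has_dimE n (U : 'rV[L]_n -> Prop) (d : nat) : Prop :=
  exists b : 'I_d -> 'rV[L]_n,
    [/\ forall i, U (b i), forall i, inFqm (b i),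
        (forall c : 'I_d -> L, (forall i, c i \in E) ->
           \sum_i c i *: b i = 0 -> forall i, c i = 0)
      & forall v, U v <-> Espan b v].

Definition basis_over (u : nat) (b : 'I_u -> L) : Prop :=
  (forall c : 'I_u -> L, (forall i, c i \in E) ->
     \sum_i c i * b i = 0 -> forall i, c i = 0) /\
  (forall y : L, exists c : 'I_u -> L, (forall i, c i \in E) /\ y = \sum_i c i * b i).

End Defs.
Arguments pad_left {F L} w n h.

(* Main.v *)
Require Import Defs.
From HB Require Import structures.
From mathcomp Require Import all_boot all_order all_algebra all_field.
From mathcomp Require Import zify.
Set Implicit Arguments. Unset Strict Implicit. Unset Printing Implicit Defensive.
Import GRing.Theory.
Local Open Scope ring_scope.

Section Frob.
Variables (F : finFieldType) (L : fieldExtType F).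
Local Notation q := (qF F).

Lemma frob1B (x y : L) : (x - y) ^+ q = x ^+ q - y ^+ q.
Proof.
rewrite /qF.
have [p _ pcharFp] := finPcharP F; rewrite (card_pprimeChar pcharFp).
elim: (logn _ _) => // n IHn; rewrite expnSr !exprM {}IHn.
by rewrite -(pchar_lalg L) in pcharFp; rewrite -pFrobenius_autE rmorphB.
Qed.

Definition fr (j : nat) (a : L) := a ^+ (q ^ j).

Lemma frB j : zmod_morphism (fr j).
Proof.
rewrite /fr; elim: j => [|j IH] a b; first by rewrite !expn0 !expr1.
by rewrite expnSr !exprM IH frob1B.
Qed.

Lemma frM j : monoid_morphism (fr j).
Proof. by rewrite /fr; split=> [|a b]; rewrite ?expr1n ?exprMn. Qed.

HB.instance Definition _ j := GRing.isZmodMorphism.Build _ _ (fr j) (frB j).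
HB.instance Definition _ j := GRing.isMonoidMorphism.Build _ _ (fr j) (frM j).
Lemma fr_alg j (c : F) : fr j (c%:A) = c%:A.
Proof.
rewrite /fr; elim: j => [|j IH]; first by rewrite expn0 expr1.
rewrite expnSr exprM IH.
have -> : (c%:A : L) ^+ q = (c ^+ q)%:A by rewrite -[LHS](rmorphXn (in_alg L)).
by rewrite /qF expf_card.
Qed.

Lemma frZ j (c : F) (a : L) : fr j (c *: a) = c *: fr j a.
Proof. by rewrite -[c *: a]mulr_algl (frM j).2 fr_alg mulr_algl. Qed.

Lemma fr_add i j (a : L) : fr i (fr j a) = fr (j + i) a.
Proof. by rewrite /fr -exprM expnD. Qed.

Lemma fr0n (a : L) : fr 0 a = a.
Proof. by rewrite /fr expn0 expr1. Qed.

Lemma q_gt1 : (1 < q)%N.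
Proof. exact: finNzRing_gt1. Qed.

End Frob.


Section Moore.
Variables (F : finFieldType) (L : fieldExtType F).
Local Notation q := (qF F).
Local Notation fr := (@fr F L).

Definition indepF t (a : 'I_t -> L) :=
  forall lam : 'I_t -> F, \sum_j lam j *: a j = 0 -> forall j, lam j = 0.

Lemma fr_sumZ i t (lam : 'I_t -> F) (a : 'I_t -> L) :
  fr i (\sum_j lam j *: a j) = \sum_j lam j *: fr i (a j).
Proof. rewrite rmorph_sum; apply: eq_bigr => j _; exact: frZ. Qed.

Lemma moore_left t (a : 'I_t -> L) (c : 'I_t -> L) : indepF a ->
  (forall j, \sum_(i < t) c i * fr i (a j) = 0) -> forall i, c i = 0.
Proof.
move=> ind hc i0; apply/eqP; apply: contraT => ci0.
pose p : {poly L} := \sum_(i < t) c i *: 'X^(q ^ i).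
have pnz : p != 0.
  apply: contraNneq ci0 => p0.
  have := congr1 (fun r : {poly L} => r`_(q ^ i0)) p0.
  rewrite coef0 coef_sum /= => <-.
  rewrite (bigD1 i0) //= coefZ coefXn eqxx mulr1 big1 ?addr0 // => i ii0.
  rewrite coefZ coefXn eqn_exp2l ?q_gt1 //.
  by case: eqP => [/val_inj e|]; [rewrite e eqxx in ii0| rewrite mulr0].
pose f := fun lam : {ffun 'I_t -> F} => \sum_j lam j *: a j.
pose rs := [seq f lam | lam <- enum {ffun 'I_t -> F}].
have := @max_poly_roots _ p rs pnz.
have -> : all (root p) rs.
  apply/allP => v /mapP[lam _ ->]; rewrite /root /p horner_sum.
  rewrite (eq_bigr (fun i => c i * fr i (f lam))); last first.
    by move=> i _; rewrite hornerZ hornerXn.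
  rewrite /f (eq_bigr (fun i => \sum_j lam j *: (c i * fr i (a j)))); last first.
    by move=> i _; rewrite fr_sumZ mulr_sumr; apply: eq_bigr => j _; rewrite scalerAr.
  rewrite exchange_big big1 //= => j _.
  by rewrite -scaler_sumr hc scaler0.
have -> : uniq rs.
  rewrite map_inj_uniq ?enum_uniq // => l1 l2 e.
  apply/ffunP => j; apply/eqP; rewrite -subr_eq0; apply/eqP.
  move: j; apply: ind.
  rewrite (eq_bigr (fun j => l1 j *: a j - l2 j *: a j)); last by move=> j _; rewrite scalerBl.
  by rewrite sumrB -/(f l1) -/(f l2) e subrr.
move=> /(_ isT isT).
rewrite size_map -cardE card_ffun card_ord.
have hsz : (size p <= (q ^ t.-1).+1)%N.
  apply: leq_trans (size_sum _ _ _) _; apply/bigmax_leqP => i _.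
  apply: leq_trans (size_scale_leq _ _) _; rewrite size_polyXn ltnS leq_exp2l ?q_gt1 //.
  by rewrite -ltnS prednK // (leq_ltn_trans _ (ltn_ord i)).
move=> /leq_trans /(_ hsz); rewrite ltnS.
case: t {a c ind hc ci0 p pnz f rs hsz} i0 => [|t] i0; first by case: i0.
rewrite /= expnS => H.
have qt : (0 < #|F| ^ t)%N by rewrite expn_gt0 (ltnW (q_gt1 F)).
by move: (ltn_Pmull (q_gt1 F) qt); rewrite ltnNge H.
Qed.


Lemma frBv i (x y : L) : fr i (x - y) = fr i x - fr i y.
Proof. exact: rmorphB. Qed.

Lemma rank_lt_ker (K : fieldType) m p (A : 'M[K]_(m, p)) :
  (\rank A < m)%N -> exists2 c : 'rV_m, c != 0 & c *m A = 0.
Proof.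
move=> hr.
have kz : kermx A != 0 by rewrite -mxrank_eq0 mxrank_ker subn_eq0 -ltnNge.
have [i ri] : exists i, row i (kermx A) != 0.
  apply/existsP; apply: contraNT kz; rewrite negb_exists => /forallP H.
  by apply/eqP/row_matrixP => i; rewrite row0; apply/eqP; have := H i; rewrite negbK.
by exists (row i (kermx A)) => //; rewrite -row_mul mulmx_ker row0.
Qed.

Lemma moore_right t (a : 'I_t -> L) (v : 'I_t -> L) : indepF a ->
  (forall i : 'I_t, \sum_j v j * fr i (a j) = 0) -> forall j, v j = 0.
Proof.
move=> ind hv.
pose Mo := \matrix_(i < t, j < t) fr i (a j).
have uMo : Mo \in unitmx.
  rewrite -row_free_unit; apply: contraT => /negP nf.
  have : (\rank Mo < t)%N by rewrite ltn_neqAle rank_leq_row andbT; exact/negP.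
  move=> /rank_lt_ker [c cnz cM]; suff : c == 0 by rewrite (negbTE cnz).
  apply/eqP/rowP => i.
  rewrite mxE; apply: (moore_left (a := a) (c := fun i => c 0 i)) => // j.
  have := congr1 (fun M : 'rV_t => M 0 j) cM; rewrite !mxE => e.
  apply: etrans e; by apply: eq_bigr => i' _; rewrite mxE.
pose V := \col_j v j.
have MV : Mo *m V = 0.
  apply/colP => i; rewrite !mxE; apply: etrans (hv i); apply: eq_bigr => j _.
  by rewrite !mxE mulrC.
move=> j; have := congr1 (fun M : 'cV_t => M j 0) (mulKmx uMo V).
by rewrite MV mulmx0 !mxE.
Qed.

Lemma moore_ex r (hr : (0 < r)%N) (a : 'I_r -> L) : exists2 h : 'I_r -> L,
  (exists j, h j != 0) & forall i : 'I_r.-1, \sum_j h j * fr i (a j) = 0.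
Proof.
pose A := \matrix_(j < r, i < r.-1) fr i (a j).
have hr1 : (r.-1 < r)%N by rewrite ltn_predL.
have [c cnz cA] := rank_lt_ker (leq_ltn_trans (rank_leq_col A) hr1).
exists (fun j => c 0 j).
  apply/existsP; apply: contraNT cnz; rewrite negb_exists => /forallP H.
  by apply/eqP/rowP => j; rewrite mxE; apply/eqP; have := H j; rewrite negbK.
move=> i; have := congr1 (fun M : 'rV_r.-1 => M 0 i) cA; rewrite !mxE => e.
by apply: etrans e; apply: eq_bigr => j _; rewrite mxE.
Qed.

Lemma indep_lift r (a : 'I_r -> L) (j0 : 'I_r) (b : 'I_r.-1 -> L) (d : 'I_r.-1 -> F) :
  indepF a -> (forall j', b j' = a (lift j0 j') - d j' *: a j0) -> indepF b.
Proof.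
move=> ind hb mu hmu j'.
pose lam := fun j => if unlift j0 j is Some j'' then mu j'' else - \sum_k mu k * d k.
have : \sum_j lam j *: a j = 0.
  rewrite (bigD1_ord j0) //= /lam unlift_none.
  rewrite (eq_bigr (fun k => mu k *: a (lift j0 k))); last by move=> k _; rewrite liftK.
  have e : \sum_k mu k *: a (lift j0 k) - (\sum_k mu k * d k) *: a j0 = \sum_j mu j *: b j.
    rewrite scaler_suml -sumrB; apply: eq_bigr => k _; by rewrite hb scalerBr scalerA.
  by rewrite addrC scaleNr e hmu.
move=> /ind /(_ (lift j0 j')); by rewrite /lam liftK.
Qed.


Definition mooreK r (a h : 'I_r -> L) :=
  forall i : 'I_r.-1, \sum_j h j * fr i (a j) = 0.

Lemma moore_split r (a h : 'I_r -> L) j0 i :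
  \sum_j h j * fr i (a j) =
  h j0 * fr i (a j0) + \sum_(j' < r.-1) h (lift j0 j') * fr i (a (lift j0 j')).
Proof. by rewrite (bigD1_ord j0). Qed.

Lemma moore_uniq r (a h h2 : 'I_r -> L) (j0 : 'I_r) : indepF a ->
  mooreK a h -> mooreK a h2 -> h j0 != 0 -> forall j, h2 j = (h2 j0 / h j0) * h j.
Proof.
move=> ind mh mh2 hj0.
set c := h2 j0 / h j0; pose v j := h2 j - c * h j.
have v0 : v j0 = 0 by rewrite /v /c divfK // subrr.
have hv : mooreK a v.
  move=> i; rewrite (eq_bigr (fun j => h2 j * fr i (a j) - c * (h j * fr i (a j)))); last first.
    by move=> j _; rewrite /v mulrBl mulrA.
  by rewrite sumrB -mulr_sumr mh mh2 mulr0 subrr.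
have indb : indepF (fun j' => a (lift j0 j')).
  apply: (indep_lift (j0 := j0) (d := fun _ => 0) ind) => j'; by rewrite scale0r subr0.
have hv' : forall i : 'I_r.-1, \sum_j' v (lift j0 j') * fr i (a (lift j0 j')) = 0.
  by move=> i; have := hv i; rewrite (moore_split _ _ j0) v0 mul0r add0r.
have := moore_right indb hv' => vl j.
apply/eqP; rewrite -subr_eq0; apply/eqP; rewrite -/(v j).
by case: (unliftP j0 j) => [j'|] ->.
Qed.

Lemma moore_indep r (a h : 'I_r -> L) : indepF a ->
  (exists j, h j != 0) -> mooreK a h -> forall lam : 'I_r -> F,
  \sum_j lam j *: h j = 0 -> forall j, lam j = 0.
Proof.
move=> ind [j1 hj1] mh lam hlam j0; apply/eqP; apply: contraT => l0.
pose d j' := lam (lift j0 j') / lam j0.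
pose b j' := a (lift j0 j') - d j' *: a j0.
have indb : indepF b by apply: (indep_lift (j0 := j0) (d := d) ind).
have hs : \sum_j' d j' *: h (lift j0 j') = - h j0.
  have := hlam; rewrite (bigD1_ord j0) //= => /eqP; rewrite addr_eq0 => /eqP e.
  rewrite (eq_bigr (fun j' => (lam j0)^-1 *: (lam (lift j0 j') *: h (lift j0 j')))); last first.
    by move=> j' _; rewrite scalerA /d mulrC.
  have e' : \sum_j' lam (lift j0 j') *: h (lift j0 j') = - (lam j0 *: h j0) by rewrite e opprK.
  by rewrite -scaler_sumr e' scalerN scalerA mulVf // scale1r.
have hb : forall i : 'I_r.-1, \sum_j' h (lift j0 j') * fr i (b j') = 0.
  move=> i; rewrite (eq_bigr (fun j' => h (lift j0 j') * fr i (a (lift j0 j'))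
     - (d j' *: h (lift j0 j')) * fr i (a j0))); last first.
    by move=> j' _; rewrite /b frBv frZ mulrBr -scalerAr -scalerAl.
  rewrite sumrB -mulr_suml hs.
  have := mh i; rewrite (moore_split _ _ j0) => /eqP; rewrite addrC addr_eq0 => /eqP ->.
  by rewrite mulNr subrr.
have hl := moore_right indb hb.
have hj0 : h j0 = 0.
  have := hlam; rewrite (bigD1_ord j0) //= big1 ?addr0; last by move=> j' _; rewrite hl scaler0.
  by move/eqP; rewrite scaler_eq0 (negbTE l0) /= => /eqP.
have : h j1 = 0 by case: (unliftP j0 j1) => [j'|] ->.
by move/eqP; rewrite (negbTE hj1).
Qed.

End Moore.


Section Vec.
Variables (F : finFieldType) (L : fieldExtType F).

Lemma entriesE n (v : 'rV[L]_n) : entries v = [tuple v 0 j | j < n] :> seq L.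
Proof. by rewrite /entries -[RHS]map_tnth_enum; apply: eq_map => j; rewrite tnth_mktuple. Qed.

Lemma rw_full n (v : 'rV[L]_n) : rank_weight v = n <-> indepF (fun j => v 0 j).
Proof.
rewrite /rank_weight entriesE; split.
  move=> hd; have : free [tuple v 0 j | j < n] by rewrite /free size_tuple hd.
  move/freeP => H lam hl; apply: H; rewrite -[RHS]hl; apply: eq_bigr => j _.
  by rewrite -tnth_nth tnth_mktuple.
move=> H; apply/eqP; rewrite -[X in _ == X](size_tuple [tuple v 0 j | j < n]).
apply/freeP => k hk; apply: H; rewrite -[RHS]hk; apply: eq_bigr => j _.
by rewrite -tnth_nth tnth_mktuple.
Qed.

Lemma rw_le n (v : 'rV[L]_n) : (rank_weight v <= n)%N.
Proof. by rewrite /rank_weight (leq_trans (dim_span _)) // /entries size_map size_enum_ord. Qed.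


Definition dot n (u v : 'rV[L]_n) := \sum_(j < n) u 0 j * v 0 j.

Lemma dotE n (u v : 'rV[L]_n) : dot u v = (u *m v^T) 0 0.
Proof. by rewrite mxE; apply: eq_bigr => j _; rewrite mxE. Qed.

Lemma dot_mulmx n (u v : 'rV[L]_n) (A : 'M[L]_n) : dot (u *m A) v = dot u (v *m A^T).
Proof. by rewrite !dotE trmx_mul trmxK mulmxA. Qed.

Lemma dotDl n (u1 u2 v : 'rV[L]_n) : dot (u1 + u2) v = dot u1 v + dot u2 v.
Proof. by rewrite !dotE mulmxDl mxE. Qed.

Lemma dotZl n c (u v : 'rV[L]_n) : dot (c *: u) v = c * dot u v.
Proof. by rewrite !dotE -scalemxAl mxE. Qed.

Lemma dot0l n (v : 'rV[L]_n) : dot 0 v = 0.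
Proof. by rewrite dotE mul0mx mxE. Qed.

Lemma dot_suml n (I : finType) (us : I -> 'rV[L]_n) v :
  dot (\sum_i us i) v = \sum_i dot (us i) v.
Proof.
rewrite dotE mulmx_suml summxE; apply: eq_bigr => i _; by rewrite dotE.
Qed.

Lemma dotC n (u v : 'rV[L]_n) : dot u v = dot v u.
Proof. by apply: eq_bigr => j _; rewrite mulrC. Qed.

Lemma rv_nthE n (v : 'rV[L]_n) (j : 'I_n) : rv_nth v j = v 0 j.
Proof. by rewrite /rv_nth valK. Qed.

Lemma rv_nth_out n (v : 'rV[L]_n) j : (n <= j)%N -> rv_nth v j = 0.
Proof. by move=> h; rewrite /rv_nth insubN // -leqNgt. Qed.

Lemma rv_nth_lt n (v : 'rV[L]_n) j (hj : (j < n)%N) : rv_nth v j = v 0 (Ordinal hj).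
Proof. by rewrite -rv_nthE. Qed.

Lemma sum_ord_nat n (f : nat -> L) : \sum_(j < n) f j = \sum_(0 <= j < n) f j.
Proof. by rewrite big_mkord. Qed.

Lemma dot_pad_left w n (v : 'rV[L]_n) (H : 'rV[L]_(n - w)) : (w <= n)%N ->
  dot v (pad_left w n H) = \sum_(t < n - w) rv_nth v (w + t) * H 0 t.
Proof.
move=> hw; rewrite /dot.
pose G := fun j : nat => rv_nth v j * (if (j < w)%N then 0 else rv_nth H (j - w)).
rewrite (eq_bigr (fun j : 'I_n => G j)); last first.
  by move=> j _; rewrite mxE /G rv_nthE.
rewrite (sum_ord_nat n G) (@big_cat_nat _ _ _ w 0 n _ _ (leq0n w) hw) /= big1_seq ?add0r; last first.
  by move=> j /andP[_]; rewrite mem_iota subn0 add0n => /andP[_ h]; rewrite /G h mulr0.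
rewrite -{1}(add0n w) big_addn big_mkord; apply: eq_bigr => t _.
by rewrite /G [(t + w)%N]addnC ltnNge leq_addr /= addKn rv_nthE.
Qed.

Lemma dot_pad_right w n (a : 'rV[L]_w) (v : 'rV[L]_n) : (w <= n)%N ->
  dot (pad_right n a) v = \sum_(t < w) a 0 t * rv_nth v t.
Proof.
move=> hw; rewrite /dot.
pose G := fun j : nat => rv_nth a j * rv_nth v j.
rewrite (eq_bigr (fun j : 'I_n => G j)); last first.
  by move=> j _; rewrite mxE /G rv_nthE.
rewrite (sum_ord_nat n G) (@big_cat_nat _ _ _ w 0 n _ _ (leq0n w) hw) /= [X in _ + X]big1_seq ?addr0; last first.
  by move=> j /andP[_]; rewrite mem_iota subnKC // => /andP[h _]; rewrite /G rv_nth_out ?mul0r.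
by rewrite -(sum_ord_nat w G); apply: eq_bigr => t _; rewrite /G rv_nthE.
Qed.

Definition ztail w n (v : 'rV[L]_n) := forall j : 'I_n, (w <= j)%N -> v 0 j = 0.

Lemma ztail_pad w n (a : 'rV[L]_w) : ztail w (pad_right n a).
Proof. by move=> j hj; rewrite mxE rv_nth_out. Qed.

Lemma ztailD w n (u v : 'rV[L]_n) : ztail w u -> ztail w v -> ztail w (u + v).
Proof. by move=> hu hv j hj; rewrite mxE hu ?hv ?addr0. Qed.

Lemma ztailZ w n c (u : 'rV[L]_n) : ztail w u -> ztail w (c *: u).
Proof. by move=> hu j hj; rewrite mxE hu ?mulr0. Qed.

Lemma ztail0 w n : ztail w (0 : 'rV[L]_n).
Proof. by move=> j hj; rewrite mxE. Qed.

Lemma ztail_sum w n (I : finType) (us : I -> 'rV[L]_n) :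
  (forall i, ztail w (us i)) -> ztail w (\sum_i us i).
Proof.
move=> h; apply: big_ind; [exact: ztail0 | exact: ztailD | move=> i _; exact: h].
Qed.

Lemma frobvE n j (v : 'rV[L]_n) i : frobv j v 0 i = fr j (v 0 i).
Proof. by rewrite mxE. Qed.

Lemma frobvD n j (u v : 'rV[L]_n) : frobv j (u + v) = frobv j u + frobv j v.
Proof. by apply/rowP => i; rewrite !mxE -/(fr j _) rmorphD. Qed.

Lemma frobvZ n j c (u : 'rV[L]_n) : frobv j (c *: u) = fr j c *: frobv j u.
Proof. by apply/rowP => i; rewrite !mxE -!/(fr j _) rmorphM. Qed.

Lemma frobv0 n j : frobv j (0 : 'rV[L]_n) = 0.
Proof. by apply/rowP => i; rewrite !mxE -/(fr j _) rmorph0. Qed.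

Lemma frobv_sum n j (I : finType) (us : I -> 'rV[L]_n) :
  frobv j (\sum_i us i) = \sum_i frobv j (us i).
Proof. by apply: (big_morph _ (frobvD j) (frobv0 _ j)). Qed.

Lemma frobv_liftF n j (v : 'rV[L]_n) (P : 'M[F]_n) :
  frobv j (v *m liftF L P) = frobv j v *m liftF L P.
Proof.
apply/rowP => i; rewrite !mxE -/(fr j _) rmorph_sum; apply: eq_bigr => t _.
by rewrite !mxE -!/(fr j _) rmorphM /= fr_alg.
Qed.

Lemma frobv_frobv n i j (v : 'rV[L]_n) : frobv i (frobv j v) = frobv (j + i) v.
Proof. by apply/rowP => t; rewrite !mxE -!/(fr _ _) fr_add. Qed.

Lemma ztail_frobv w n j (v : 'rV[L]_n) : ztail w v -> ztail w (frobv j v).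
Proof. by move=> h t ht; rewrite mxE h // -/(fr j _) rmorph0. Qed.

Lemma ztail_dot w n (b y : 'rV[L]_n) : (w <= n)%N -> ztail w b ->
  (forall t : 'I_n, (t < w)%N -> y 0 t = 0) -> dot b y = 0.
Proof.
move=> hw hb hy; rewrite /dot big1 // => j _.
by case: (ltnP j w) => h; [rewrite hy ?mulr0 | rewrite hb ?mul0r].
Qed.


Lemma dot_ztail w n (b v : 'rV[L]_n) : (w <= n)%N -> ztail w b ->
  dot b v = \sum_(t < w) rv_nth b t * rv_nth v t.
Proof.
move=> hw hb; rewrite /dot.
pose G := fun j : nat => rv_nth b j * rv_nth v j.
rewrite (eq_bigr (fun j : 'I_n => G j)); last first.
  by move=> j _; rewrite /G !rv_nthE.
rewrite (sum_ord_nat n G) (@big_cat_nat _ _ _ w 0 n _ _ (leq0n w) hw) /= [X in _ + X]big1_seq ?addr0; last first.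
  move=> j /andP[_]; rewrite mem_iota subnKC // => /andP[h1 h2].
  by rewrite /G (rv_nth_lt _ h2) hb ?mul0r.
by rewrite -(sum_ord_nat w G).
Qed.

Lemma rv_nthZ n c (v : 'rV[L]_n) j : rv_nth (c *: v) j = c * rv_nth v j.
Proof. by rewrite /rv_nth; case: insubP => [j' _ _|_]; rewrite ?mxE ?mulr0. Qed.

Lemma rv_nth_frobv n i (v : 'rV[L]_n) j : rv_nth (frobv i v) j = fr i (rv_nth v j).
Proof. by rewrite /rv_nth; case: insubP => [j' _ _|_]; rewrite ?mxE ?rmorph0. Qed.

Lemma dotZr n c (u v : 'rV[L]_n) : dot u (c *: v) = c * dot u v.
Proof. by rewrite dotC dotZl dotC. Qed.

Lemma pad_leftZ w n c (h : 'rV[L]_(n - w)) : pad_left w n (c *: h) = c *: pad_left w n h.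
Proof. by apply/rowP => j; rewrite !mxE; case: ifP; rewrite ?mulr0 // rv_nthZ. Qed.

Lemma indep_mul n (v : 'rV[L]_n) (P : 'M[F]_n) : P \in unitmx ->
  indepF (fun j => v 0 j) -> indepF (fun j => (v *m liftF L P) 0 j).
Proof.
move=> uP ind lam hl.
pose La := \col_j lam j.
have PL : P *m La = 0.
  apply/colP => l; rewrite !mxE; move: l; apply: ind.
  apply: etrans hl; rewrite (eq_bigr (fun l => \sum_j (P l j * lam j) *: v 0 l)); last first.
    by move=> l _; rewrite scaler_suml; apply: eq_bigr => j _; rewrite !mxE.
  rewrite exchange_big; apply: eq_bigr => j _; rewrite !mxE scaler_sumr.
  by apply: eq_bigr => l _; rewrite mxE /= mulr_algr scalerA mulrC.

move=> j; have := mulKmx uP La; rewrite PL mulmx0 => /colP /(_ j).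
by rewrite !mxE.
Qed.


Lemma indep_shift w n (c : 'rV[L]_n) : (w <= n)%N -> indepF (fun j => c 0 j) ->
  indepF (fun t : 'I_(n - w) => rv_nth c (w + t)).
Proof.
move=> hw ind lam hl t.
pose H : 'rV[L]_(n - w) := \row_t (lam t)%:A.
pose lam' := fun j : 'I_n => if (j < w)%N then 0 else
   (if insub (j - w)%N is Some t then lam t else 0).
have e j : (lam' j)%:A = pad_left w n H 0 j :> L.
  rewrite mxE /lam'; case: ifP => _; first by rewrite scale0r.
  by rewrite /rv_nth; case: insub => [t'|]; rewrite ?mxE ?scale0r.
have : \sum_j lam' j *: c 0 j = 0.
  rewrite -[RHS]hl; apply: etrans (_ : dot c (pad_left w n H) = _).
    by apply: eq_bigr => j _; rewrite -mulr_algr e.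
  rewrite dot_pad_left //; apply: eq_bigr => t' _; by rewrite mxE mulr_algr.
have ht : (w + t < n)%N by rewrite -ltn_subRL.
move=> /ind /(_ (Ordinal ht)); rewrite /lam' /= ltnNge leq_addr /= addKn.
case: insubP => [t' _ et|]; last by rewrite ltn_ord.
by have -> : t = t' by apply: val_inj.
Qed.

End Vec.


Section Blk.
Variables (K : fieldType) (n w : nat).

Lemma pidM (M : 'M[K]_n) i j : (pid_mx w *m M) i j = (i < w)%:R * M i j.
Proof.
rewrite mxE (bigD1 i) //= big1 ?addr0; first by rewrite mxE eqxx.
move=> k ki; rewrite mxE.
have -> : (i == k :> nat) = false by apply/eqP => e; move: ki; rewrite (val_inj e) eqxx.
by rewrite mul0r.
Qed.

Lemma Mpid (M : 'M[K]_n) i j : (M *m pid_mx w) i j = M i j * (j < w)%:R.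
Proof.
rewrite mxE (bigD1 j) //= big1 ?addr0; first by rewrite mxE eqxx.
move=> k kj; rewrite mxE.
have -> : (k == j :> nat) = false by apply/eqP => e; move: kj; rewrite (val_inj e) eqxx.
by rewrite mulr0.
Qed.

Lemma blk_inv (M : 'M[K]_n) : M \in unitmx ->
  (forall l j : 'I_n, (l < w)%N -> (w <= j)%N -> M l j = 0) ->
  forall l j : 'I_n, (l < w)%N -> (w <= j)%N -> invmx M l j = 0.
Proof.
move=> uM hM.
set U := pid_mx w : 'M[K]_n.
have UM : (U *m M <= U)%MS.
  suff -> : U *m M = (U *m M) *m U by exact: submxMl.
  apply/matrixP => i j; rewrite Mpid !pidM.
  case: (ltnP i w) => hi; case: (ltnP j w) => hj; rewrite /= ?mul0r ?mulr1 ?mulr0 ?mul1r //.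
  by rewrite hM // !mulr0.
have e : (U <= U *m M)%MS.
  by rewrite -(mxrank_leqif_sup UM).2 mxrankMfree ?row_free_unit.
have := submxMr (invmx M) e; rewrite mulmxK // => /submxP[D hD] l j hl hj.
have := congr1 (fun A : 'M_n => A l j) hD; rewrite pidM Mpid hl mul1r.
by rewrite ltnNge hj mulr0.
Qed.

End Blk.


Section Ext.
Variables (F : finFieldType) (L : fieldExtType F) (E : {subfield L}) (m u : nat).
Hypotheses (hEdim : \dim E = m) (hLdim : \dim {:L} = (m * u)%N).
Local Notation fr := (@fr F L).
Local Notation Tr := (@trace_ext F L m u).

Lemma inE_fix a : (a \in E) = (fr m a == a).
Proof. by rewrite Fermat's_little_theorem hEdim. Qed.

Lemma frL_fix a : fr (m * u) a = a.
Proof.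
have := @Fermat's_little_theorem F L {:L}%AS a; rewrite memvf hLdim => /esym/eqP.
by [].
Qed.

Lemma frE_fix i a : a \in E -> fr (m * i) a = a.
Proof.
move=> ha; elim: i => [|i IH]; first by rewrite muln0 fr0n.
by rewrite mulnS addnC -fr_add IH; apply/eqP; rewrite -inE_fix.
Qed.

Lemma TrE a : Tr a = \sum_(i < u) fr (m * i) a.
Proof. by []. Qed.

Lemma TrD a b : Tr (a + b) = Tr a + Tr b.
Proof. by rewrite !TrE -big_split; apply: eq_bigr => i _; rewrite rmorphD. Qed.

Lemma Tr0 : Tr 0 = 0.
Proof. by rewrite TrE big1 // => i _; rewrite rmorph0. Qed.

Lemma TrM a e : e \in E -> Tr (e * a) = e * Tr a.
Proof.
move=> he; rewrite !TrE mulr_sumr; apply: eq_bigr => i _.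
by rewrite rmorphM /= frE_fix.
Qed.

Lemma TrZ a (c : F) : Tr (c *: a) = c *: Tr a.
Proof. rewrite !TrE scaler_sumr; apply: eq_bigr => i _; exact: frZ. Qed.

Lemma Tr_sum (I : finType) (f : I -> L) : Tr (\sum_i f i) = \sum_i Tr (f i).
Proof. exact: (big_morph _ TrD Tr0). Qed.

Lemma Tr_inE a : Tr a \in E.
Proof.
rewrite inE_fix TrE rmorph_sum /=.
rewrite (eq_bigr (fun i : 'I_u => fr (m * i.+1) a)); last first.
  by move=> i _; rewrite fr_add mulnS addnC.
apply/eqP.
have h1 := @big_ord_recr L 0 +%R u (fun i : 'I_u.+1 => fr (m * i) a).
have h2 := @big_ord_recl L 0 +%R u (fun i : 'I_u.+1 => fr (m * i) a).
rewrite /= muln0 fr0n frL_fix in h1 h2.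
rewrite h1 addrC in h2; move/addrI: h2 => ->.
by apply: eq_bigr => i _.
Qed.


Lemma E_square w (Bm : 'I_w -> 'I_w -> L) (v : 'I_w -> L) :
  (forall i t, Bm i t \in E) -> (forall t, v t \in E) ->
  (forall c : 'I_w -> L, (forall i, c i \in E) ->
     (forall t, \sum_i c i * Bm i t = 0) -> forall i, c i = 0) ->
  (forall i, \sum_t Bm i t * v t = 0) -> forall t, v t = 0.
Proof.
move=> hB hv hind hBv.
pose Bs : 'M[subvs_of E]_w := \matrix_(i, t) vsproj E (Bm i t).
pose vs : 'cV[subvs_of E]_w := \col_t vsproj E (v t).
have vB i t : vsval (Bs i t) = Bm i t by rewrite mxE vsprojK.
have vv t : vsval (vs t 0) = v t by rewrite mxE vsprojK.
have uB : Bs \in unitmx.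
  rewrite -row_free_unit; apply: contraT => /negP nf.
  have : (\rank Bs < w)%N by rewrite ltn_neqAle rank_leq_row andbT; apply/negP.
  move=> /rank_lt_ker [c cnz cB]; suff: c == 0 by rewrite (negbTE cnz).
  apply/eqP/rowP => i; rewrite mxE; apply: subvs_inj; rewrite rmorph0.
  apply: (hind (fun i0 => vsval (c 0 i0))) => [i0|t]; first exact: subvsP.
  have := congr1 (fun M : 'rV_w => vsval (M 0 t)) cB; rewrite !mxE rmorph_sum rmorph0 /= => e.
  by apply: etrans e; apply: eq_bigr => i1 _; rewrite mxE vsprojK.
have Bv : Bs *m vs = 0.
  apply/colP => i; rewrite !mxE; apply: subvs_inj; rewrite rmorph_sum rmorph0; apply: etrans (hBv i).
  by apply: eq_bigr => t _; rewrite rmorphM /= vB vv.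
move=> t; rewrite -vv; have := mulKmx uB vs; rewrite Bv mulmx0 => <-.
by rewrite mxE rmorph0.
Qed.

End Ext.


Section Main.
Variables (F : finFieldType) (L : fieldExtType F) (E : {subfield L}) (m u k n w : nat).
Hypotheses (hEdim : \dim E = m) (hLdim : \dim {:L} = (m * u)%N).
Hypotheses (hkn : (k < n)%N) (hw1 : (w < n - k)%N) (hk0 : (0 < k)%N).
Variables (g : 'rV[L]_n) (x : 'rV[L]_k) (s : 'rV[L]_w) (P : 'M[F]_n) (gamma : 'I_u -> L).
Hypotheses (hgE : inFqm E g) (hg : rank_weight g = n) (hs : rank_weight s = w) (hP : P \in unitmx).

Local Notation fr := (@fr F L).
Local Notation Tr := (@trace_ext F L m u).
Local Notation G := (gab_mx k g).
Local Notation Pi := (liftF L (invmx P)).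
Local Notation PL := (liftF L P).
Local Notation z := (pad_right n s *m Pi).
Local Notation K := (x *m G + z).
Local Notation Ki := (fun i : 'I_u => map_mx Tr (gamma i *: K)).
Local Notation bi := (fun i : 'I_u => pad_right n (map_mx Tr (gamma i *: s))).
Local Notation Cpub := (sumset (Espan E (fun i : 'I_k => row i G)) (Espan E Ki)).
Local Notation B := (Espan E bi).
Local Notation f := (n - w - k - 1)%N.

Lemma hwn : (w <= n)%N. Proof. lia. Qed.

Lemma rowG i : row i G = frobv i g.
Proof. by apply/rowP => j; rewrite !mxE. Qed.

Lemma Pi_entry i j : Pi i j = (invmx P i j)%:A.
Proof. by rewrite mxE. Qed.

Lemma nth_trs i t : rv_nth (map_mx Tr (gamma i *: s)) t = Tr (gamma i * rv_nth s t).
Proof.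
rewrite /rv_nth; case: insubP => [t' _ _|_]; first by rewrite !mxE.
by rewrite mulr0 Tr0.
Qed.

Lemma Ki_form i : Ki i = \sum_(l < k) Tr (gamma i * x 0 l) *: frobv l g + bi i *m Pi.
Proof.
apply/rowP => j; rewrite !mxE summxE mulrDr TrD; congr (_ + _).
  rewrite mulr_sumr Tr_sum; apply: eq_bigr => l _; rewrite !mxE.
  rewrite mulrA (mulrC _ (g 0 j ^+ _)) (TrM u hEdim) ?rpredX // mulrC.
  by [].
rewrite mulr_sumr Tr_sum; apply: eq_bigr => t _; rewrite !mxE /= nth_trs.
by rewrite !mulr_algr -scalerAr TrZ.
Qed.


Lemma sum_Ki (d : 'I_u -> L) : \sum_i d i *: Ki i =
  \sum_(l < k) (\sum_i d i * Tr (gamma i * x 0 l)) *: frobv l g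
  + (\sum_i d i *: bi i) *m Pi.
Proof.
rewrite (eq_bigr (fun i => \sum_(l < k) (d i * Tr (gamma i * x 0 l)) *: frobv l g
   + d i *: (bi i *m Pi))); last first.
  move=> i _; rewrite Ki_form scalerDr scaler_sumr; congr (_ + _).
  by apply: eq_bigr => l _; rewrite scalerA.
rewrite big_split /=; congr (_ + _).
  by rewrite exchange_big; apply: eq_bigr => l _; rewrite scaler_suml.
by rewrite mulmx_suml; apply: eq_bigr => i _; rewrite scalemxAl.
Qed.

Definition goodC (v : 'rV[L]_n) := exists (mu : 'I_k -> L) (beta : 'rV[L]_n),
  ztail w beta /\ v = \sum_(l < k) mu l *: frobv l g + beta *m Pi.

Lemma Cpub_good v : Cpub v -> goodC v.
Proof.
move=> [a [b [[c [hc ->]] [[d [hd ->]] ->]]]].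
exists (fun l => c l + \sum_i d i * Tr (gamma i * x 0 l)), (\sum_i d i *: bi i).
split; first by apply: ztail_sum => i; apply: ztailZ; exact: ztail_pad.
rewrite sum_Ki addrA -big_split /=; congr (_ + _); apply: eq_bigr => l _.
by rewrite rowG scalerDl.
Qed.

Lemma frob_form j (mu : 'I_k -> L) beta :
  frobv j (\sum_(l < k) mu l *: frobv l g + beta *m Pi) =
  \sum_(l < k) fr j (mu l) *: frobv (l + j) g + frobv j beta *m Pi.
Proof.
rewrite frobvD frobv_sum frobv_liftF; congr (_ + _); apply: eq_bigr => l _.
by rewrite frobvZ frobv_frobv.
Qed.

Definition Moore (y : 'rV[L]_n) := forall i, (i < n - w - 1)%N -> dot (frobv i g) y = 0.
Definition Zc (y : 'rV[L]_n) := forall t : 'I_n, (t < w)%N -> (y *m Pi^T) 0 t = 0.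

Lemma dual_of_MZ y : inFqm E y -> Moore y -> Zc y -> dual E (Lambda f Cpub) y.
Proof.
move=> hyE hM hZ; split => // c [us [hus ->]].
change (dot (\sum_(j < f.+1) frobv j (us j)) y = 0).
rewrite dot_suml big1 // => j _.
have [mu [beta [zt ->]]] := Cpub_good (hus j).
rewrite frob_form dotDl dot_suml big1 ?add0r.
  by rewrite dot_mulmx; apply: (ztail_dot hwn (ztail_frobv j zt)) => t ht; exact: hZ.
move=> l _; rewrite dotZl hM ?mulr0 //.
have := ltn_ord l; have := ltn_ord j; lia.
Qed.


Lemma Espan0 (I : finType) (vs : I -> 'rV[L]_n) : Espan E vs 0.
Proof.
exists (fun _ => 0); split => [i|]; first exact: rpred0.
by rewrite big1 // => i _; rewrite scale0r.
Qed.

Lemma Cpub0 : Cpub 0.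
Proof. by exists 0, 0; split; [exact: Espan0 | split; [exact: Espan0 | rewrite addr0]]. Qed.

Lemma Cpub_rowG l : Cpub (row l G).
Proof.
exists (row l G), 0; split; last by split; [exact: Espan0 | rewrite addr0].
exists (fun i => if i == l then 1 else 0); split => [i|].
  by case: eqP => _; [exact: rpred1 | exact: rpred0].
rewrite (bigD1 l) //= eqxx scale1r big1 ?addr0 // => i /negbTE ->.
by rewrite scale0r.
Qed.

Lemma Lam_single j (hj : (j < f.+1)%N) v : Cpub v -> Lambda f Cpub (frobv j v).
Proof.
move=> hv; exists (fun j' => if j' == Ordinal hj then v else 0); split => [j'|].
  by case: eqP => _; [exact: hv | exact: Cpub0].
rewrite (bigD1 (Ordinal hj)) //= eqxx big1 ?addr0 // => j' /negbTE ->.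
exact: frobv0.
Qed.

Lemma Moore_of_dual y : dual E (Lambda f Cpub) y -> Moore y.
Proof.
move=> [_ hd] i hi.
have hl : (minn i k.-1 < k)%N by lia.
have hj : (i - minn i k.-1 < f.+1)%N by lia.
have := hd _ (Lam_single hj (Cpub_rowG (Ordinal hl))).
rewrite rowG frobv_frobv /=.
have -> : (minn i k.-1 + (i - minn i k.-1))%N = i by lia.
by [].
Qed.

Lemma B_Cpub v : B v -> Cpub (v *m Pi).
Proof.
move=> [c [hc ->]].
exists (\sum_(l < k) (- \sum_i c i * Tr (gamma i * x 0 l)) *: row l G), (\sum_i c i *: Ki i).
split.
  exists (fun l => - \sum_i c i * Tr (gamma i * x 0 l)); split => // l.
  rewrite rpredN rpred_sum // => i _; rewrite rpredM //; exact: (Tr_inE hEdim hLdim).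
split; first by exists c.
rewrite sum_Ki addrA -big_split /= [X in _ = X + _]big1 ?add0r // => l _.
by rewrite rowG scaleNr addNr.
Qed.

Lemma LamB_Cpub v : Lambda f B v -> Lambda f Cpub (v *m Pi).
Proof.
move=> [us [hus ->]]; exists (fun j => us j *m Pi); split => [j|]; first exact: B_Cpub.
by rewrite mulmx_suml; apply: eq_bigr => j _; rewrite frobv_liftF.
Qed.

Lemma LamB_ztail v : Lambda f B v -> ztail w v.
Proof.
move=> [us [hus ->]]; apply: ztail_sum => j; apply: ztail_frobv.
have [c [_ ->]] := hus j; apply: ztail_sum => i; apply: ztailZ; exact: ztail_pad.
Qed.

Lemma inFqm_Pi y : inFqm E y -> inFqm E (y *m Pi^T).
Proof.
move=> hy j; rewrite mxE rpred_sum // => l _; rewrite !mxE rpredM //=.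
by rewrite rpredZ // rpred1.
Qed.

Lemma rv_nth_inE n' (v : 'rV[L]_n') t : inFqm E v -> rv_nth v t \in E.
Proof. by move=> hv; rewrite /rv_nth; case: insub => [t'|]; [exact: hv | exact: rpred0]. Qed.

Lemma Zc_of_dual y : has_dimE E (Lambda f B) w -> dual E (Lambda f Cpub) y -> Zc y.
Proof.
move=> [b [hb hbE hbind _]] [hyE hd].
set y' := y *m Pi^T.
have hdot i : dot (b i) y' = 0.
  by rewrite /y' -dot_mulmx; apply: hd (LamB_Cpub (hb i)).
have hbz i : ztail w (b i) := LamB_ztail (hb i).
have hv := @E_square F L E w (fun i t => rv_nth (b i) t) (fun t => rv_nth y' t)
  (fun i t => rv_nth_inE _ (hbE i)) (fun t => rv_nth_inE _ (inFqm_Pi hyE)).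
have H0 : forall t : 'I_w, rv_nth y' t = 0.
  apply: hv => [c hc hct|i].
    apply: hbind => //; apply/rowP => j; rewrite summxE mxE.
    case: (ltnP j w) => hjw.
      apply: etrans (hct (Ordinal hjw)); apply: eq_bigr => i _; by rewrite mxE /= rv_nthE.
    by rewrite big1 // => i _; rewrite mxE hbz ?mulr0.
  by rewrite -(dot_ztail _ hwn (hbz i)) hdot.
move=> t ht; rewrite -rv_nthE; exact: (H0 (Ordinal ht)).
Qed.


Local Notation a := (fun t : 'I_(n - w) => rv_nth (g *m PL) (w + t)).

Lemma dotMoore i (H : 'rV[L]_(n - w)) :
  dot (frobv i g) (pad_left w n H *m PL^T) = \sum_t H 0 t * fr i (a t).
Proof.
rewrite -dot_mulmx -frobv_liftF dot_pad_left ?hwn //; apply: eq_bigr => t _.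
by rewrite rv_nth_frobv mulrC.
Qed.

Lemma Moore_pad (H : 'rV[L]_(n - w)) :
  Moore (pad_left w n H *m PL^T) <-> mooreK a (fun t => H 0 t).
Proof.
split => [hM i | hm i hi]; first by rewrite -dotMoore hM // subn1.
by rewrite dotMoore; apply: (hm (Ordinal (_ : i < (n - w).-1)%N)); rewrite -subn1.
Qed.

Lemma PLPi : PL^T *m Pi^T = 1%:M.
Proof.
by rewrite -trmx_mul -map_mxM mulVmx // map_mx1 trmx1.
Qed.

Lemma PiPL : Pi^T *m PL^T = 1%:M.
Proof.
by rewrite -trmx_mul -map_mxM mulmxV // map_mx1 trmx1.
Qed.

Lemma Zc_pad (H : 'rV[L]_(n - w)) : Zc (pad_left w n H *m PL^T).
Proof.
move=> t ht; by rewrite -mulmxA PLPi mulmx1 mxE ht.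
Qed.

Lemma inFqm_pad (H : 'rV[L]_(n - w)) : inFqm E H -> inFqm E (pad_left w n H *m PL^T).
Proof.
move=> hH j; rewrite mxE rpred_sum // => l _; rewrite !mxE rpredM //=.
  by case: ifP => _; [exact: rpred0 | exact: rv_nth_inE].
by rewrite rpredZ // rpred1.
Qed.

Lemma Zc_form y : Zc y ->
  y = pad_left w n (\row_t rv_nth (y *m Pi^T) (w + t)) *m PL^T.
Proof.
move=> hZ.
suff -> : pad_left w n (\row_t rv_nth (y *m Pi^T) (w + t)) = y *m Pi^T.
  by rewrite -mulmxA PiPL mulmx1.
apply/rowP => j; rewrite mxE; case: ifP => hj; first by rewrite hZ.
have hj' : (j - w < n - w)%N by have := ltn_ord j; lia.
rewrite (rv_nth_lt _ hj') mxE /= subnKC ?rv_nthE //; lia.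
Qed.

Lemma a_inE t : a t \in E.
Proof.
apply: rv_nth_inE => j; rewrite mxE rpred_sum // => l _; rewrite !mxE rpredM //=.
by rewrite rpredZ // rpred1.
Qed.

Lemma a_indep : indepF a.
Proof. exact: (indep_shift hwn (indep_mul hP (proj1 (rw_full g) hg))). Qed.


Lemma h_exists : exists h : 'rV[L]_(n - w),
  [/\ inFqm E h, mooreK a (fun t => h 0 t) & exists j0, h 0 j0 = 1].
Proof.
have hr : (0 < n - w)%N by lia.
have [h0 [j0 nz] mk] := moore_ex hr a.
pose h1 := fun j => h0 j / h0 j0.
have mk1 : mooreK a h1.
  move=> i; rewrite (eq_bigr (fun j => (h0 j0)^-1 * (h0 j * fr i (a j)))); last first.
    by move=> j _; rewrite /h1 mulrAC mulrC mulrA.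
  by rewrite -mulr_sumr mk mulr0.
have h1j0 : h1 j0 = 1 by rewrite /h1 divff.
pose h2 := fun j => fr m (h1 j).
have mk2 : mooreK a h2.
  move=> i; rewrite (eq_bigr (fun j => fr m (h1 j * fr i (a j)))); last first.
    move=> j _; rewrite rmorphM /=; congr (_ * _); apply/eqP.
    by rewrite eq_sym -(inE_fix hEdim); apply: rpredX; exact: a_inE.
  by rewrite -rmorph_sum /= mk1 rmorph0.
have e := moore_uniq a_indep mk1 mk2 (_ : h1 j0 != 0); rewrite h1j0 oner_eq0 in e.
have hE j : h1 j \in E.
  rewrite (inE_fix hEdim); apply/eqP; rewrite -/(h2 j) e //.
  by rewrite /h2 h1j0 rmorph1 divr1 mul1r.
exists (\row_j h1 j); split => [j|| ]; first by rewrite mxE.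
  by move=> i; apply: etrans (mk1 i); apply: eq_bigr => j _; rewrite mxE.
by exists j0; rewrite mxE.
Qed.


Lemma dual_char (hdim : has_dimE E (Lambda f B) w) (h : 'rV[L]_(n - w))
  (hE : inFqm E h) (hm : mooreK a (fun t => h 0 t)) j0 (h1 : h 0 j0 = 1) y :
  dual E (Lambda f Cpub) y <-> exists c, c \in E /\ y = c *: (pad_left w n h *m PL^T).
Proof.
split.
  move=> hd; have hZ := Zc_of_dual hdim hd; have hMo := Moore_of_dual hd.
  have hyE := proj1 hd.
  pose hy : 'rV[L]_(n - w) := \row_t rv_nth (y *m Pi^T) (w + t).
  have ey := Zc_form hZ; rewrite -/hy in ey.
  have hmy : mooreK a (fun t => hy 0 t) by apply/Moore_pad; rewrite -ey.
  have e := moore_uniq a_indep hm hmy (_ : h 0 j0 != 0); rewrite h1 oner_eq0 divr1 in e.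
  exists (hy 0 j0); split; first by rewrite mxE; apply: rv_nth_inE; exact: inFqm_Pi.
  rewrite ey scalemxAl -pad_leftZ; congr (pad_left _ _ _ *m _).
  by apply/rowP => t; rewrite [RHS]mxE; exact: e.
move=> [c [hc ->]]; apply: dual_of_MZ.
- move=> j; rewrite mxE rpredM //; exact: inFqm_pad.
- by move=> i hi; rewrite dotZr (proj2 (Moore_pad h) hm i hi) mulr0.
- move=> t ht; by rewrite -scalemxAl mxE Zc_pad // mulr0.
Qed.


Lemma span_rv_nth w' (v : 'rV[L]_w') j : rv_nth v j \in <<entries v>>%VS.
Proof.
rewrite /rv_nth; case: insub => [j'|]; last exact: rpred0.
by apply: memv_span; apply: map_f; rewrite mem_enum.
Qed.

Lemma part2 (hdim : has_dimE E (Lambda f B) w) (h : 'rV[L]_(n - w))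
  (hE : inFqm E h) (hm : mooreK a (fun t => h 0 t)) j0 (h1 : h 0 j0 = 1)
  (hrank : indepF (fun t => h 0 t)) (ht : 'rV[L]_n) :
  dual E (Lambda f Cpub) ht -> ht != 0 ->
  forall T : 'M[F]_n, T \in unitmx ->
  (exists h' : 'rV[L]_(n - w), inFqm E h' /\
        ht *m (liftF L (invmx T))^T = pad_left w n h') ->
  exists zs : 'rV[L]_w, rank_weight zs = w /\ z *m liftF L T = pad_right n zs.
Proof.
move=> hd hnz T uT [h' [_ eh']].
have [c [hc ec]] := proj1 (dual_char hdim hE hm h1 ht) hd.
have c0 : c != 0 by apply: contraNneq hnz => c0; rewrite ec c0 scale0r.
pose M := invmx T *m P.
have uM : M \in unitmx by rewrite unitmx_mul unitmx_inv uT hP.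
have eM : ht *m (liftF L (invmx T))^T = c *: (pad_left w n h *m (liftF L M)^T).
  by rewrite ec -scalemxAl -mulmxA -trmx_mul -map_mxM.
have hM0 : forall l j : 'I_n, (l < w)%N -> (w <= j)%N -> M l j = 0.
  move=> l j hl hj.
  have := congr1 (fun v : 'rV_n => v 0 l) eh'; rewrite eM !mxE hl => /eqP.
  rewrite mulf_eq0 (negbTE c0) /= => /eqP e0.
  have e1 : dot (row l (liftF L M)) (pad_left w n h) = 0.
    by apply: etrans e0; apply: eq_bigr => j' _; rewrite !mxE mulrC.
  rewrite dot_pad_left ?hwn // in e1.
  pose Mn := fun j' : nat => if insub j' is Some j'' then M l j'' else 0.
  have e2 : \sum_(t < n - w) Mn (w + t)%N *: h 0 t = 0.
    apply: etrans e1; apply: eq_bigr => t _; rewrite /rv_nth /Mn.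
    by case: insub => [j''|]; rewrite ?mxE ?scale0r ?mul0r // mulr_algl.
  have hjt : (j - w < n - w)%N by have := ltn_ord j; lia.
  have := hrank _ e2 (Ordinal hjt); rewrite /Mn /= subnKC //.
  case: insubP => [j'' _ ej|]; last by rewrite ltn_ord.
  move=> Hj; have ej2 : j = j'' by apply: val_inj.
  by move: Hj; rewrite ej2 /M mxE.
pose N := invmx M.
have hN := blk_inv uM hM0; rewrite -/N in hN.
have eN : invmx P *m T = N.
  have e : M *m (invmx P *m T) = 1%:M.
    by rewrite /M mulmxA -(mulmxA (invmx T)) mulmxV // mulmx1 mulVmx.
  by rewrite -[invmx P *m T](mulKmx uM) e mulmx1.
have zT : z *m liftF L T = pad_right n s *m liftF L N by rewrite -mulmxA -map_mxM eN.
pose zs : 'rV[L]_w := \row_t rv_nth (z *m liftF L T) t.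
have ez : z *m liftF L T = pad_right n zs.
  apply/rowP => j; rewrite [RHS]mxE; case: (ltnP j w) => hj.
    by rewrite (rv_nth_lt _ hj) [RHS]mxE /= rv_nthE.
  rewrite rv_nth_out // zT mxE big1 // => t _; rewrite !mxE.
  case: (ltnP t w) => htw; first by rewrite hN // rmorph0 mulr0.
  by rewrite rv_nth_out ?mul0r.
exists zs; split => //.
apply/eqP; rewrite eqn_leq rw_le /= -{1}hs /rank_weight.
apply: dimvS; apply/span_subvP => v /mapP[l _ ->].
have epad : pad_right n s = pad_right n zs *m liftF L M.
  by rewrite -ez zT -mulmxA -map_mxM mulVmx // map_mx1 mulmx1.
have hl : (l < n)%N by apply: leq_trans (ltn_ord l) hwn.
have := congr1 (fun v : 'rV_n => v 0 (Ordinal hl)) epad; rewrite !mxE /=.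
rewrite rv_nthE => ->.
apply: rpred_sum => j _; rewrite !mxE /= mulr_algr; apply: rpredZ.
exact: span_rv_nth.
Qed.


Lemma main_sec : has_dimE E (Lambda f B) w ->
  (has_dimE E (dual E (Lambda f Cpub)) 1 /\
   exists h : 'rV[L]_(n - w),
     [/\ inFqm E h, rank_weight h = (n - w)%N &
         forall y, dual E (Lambda f Cpub) y <->
           exists c, c \in E /\ y = c *: (pad_left w n h *m (liftF L P)^T)])
  /\
  (forall ht : 'rV[L]_n, dual E (Lambda f Cpub) ht -> ht != 0 ->
   forall T : 'M[F]_n, T \in unitmx ->
   (exists h' : 'rV[L]_(n - w), inFqm E h' /\
        ht *m (liftF L (invmx T))^T = pad_left w n h') ->
   exists zs : 'rV[L]_w, rank_weight zs = w /\ z *m liftF L T = pad_right n zs).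
Proof.
move=> hdim.
have [h [hE hm [j0 h1]]] := h_exists.
have hrank : indepF (fun t => h 0 t).
  apply: moore_indep a_indep _ hm; exists j0; by rewrite h1 oner_eq0.
have hch := dual_char hdim hE hm h1.
split; last by move=> ht hd hnz T uT hh; apply: (part2 hdim hE hm h1 hrank hd hnz uT hh).
split; last by exists h; split => //; apply/rw_full.
set y0 := pad_left w n h *m PL^T.
have hy0 : y0 != 0.
  apply/eqP => e0.
  have : pad_left w n h = y0 *m Pi^T by rewrite /y0 -mulmxA PLPi mulmx1.
  rewrite e0 mul0mx => /rowP.
  have hj : (w + j0 < n)%N by have := ltn_ord j0; lia.
  move=> /(_ (Ordinal hj)); rewrite !mxE /= ltnNge leq_addr /= addKn.
  rewrite (rv_nth_lt _ (ltn_ord j0)).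
  have -> : Ordinal (ltn_ord j0) = j0 by apply: val_inj.
  by rewrite h1 => /eqP; rewrite oner_eq0.
exists (fun _ => y0); split.
- by move=> _; apply/hch; exists 1; rewrite rpred1 scale1r.
- by move=> _; apply: inFqm_pad.
- move=> c _; rewrite big_ord1 => /eqP; rewrite scaler_eq0 (negbTE hy0) orbF => /eqP c0 i.
  by rewrite (ord1 i).
- move=> v; rewrite hch; split.
    by move=> [c [hc ->]]; exists (fun _ => c); split => //; rewrite big_ord1.
  by move=> [c [hc ->]]; exists (c 0); split => //; rewrite big_ord1.
Qed.

End Main.


Theorem mainTheorem3
  (F : finFieldType) (L : fieldExtType F) (E : {subfield L})
  (m u k n w : nat)
  (hEdim : \dim E = m) (hLdim : \dim {:L} = (m * u)%N)
  (hu : (1 < u)%N) (huk : (u < k)%N) (hkn : (k < n)%N) (hnm : (n <= m)%N)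
  (hw1 : (w < n - k)%N) (hw2 : ((n - k) %/ 2 < w)%N)
  (g : 'rV[L]_n) (hgE : inFqm E g) (hg : rank_weight g = n)
  (x : 'rV[L]_k) (hx : basis_over E (fun i : 'I_u => rv_nth x (k - u + i)))
  (s : 'rV[L]_w) (hs : rank_weight s = w)
  (P : 'M[F]_n) (hP : P \in unitmx)
  (gamma : 'I_u -> L) (hgamma : basis_over E gamma) :
  let G := gab_mx k g in
  let z := pad_right n s *m liftF L (invmx P) in
  let K := x *m G + z in
  let Ki := fun i : 'I_u => map_mx (trace_ext m u) (gamma i *: K) in
  let bi := fun i : 'I_u => pad_right n (map_mx (trace_ext m u) (gamma i *: s)) in
  let Cpub := sumset (Espan E (fun i : 'I_k => row i G)) (Espan E Ki) in
  let B := Espan E bi in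
  let f := (n - w - k - 1)%N in
  has_dimE E (Lambda f B) w ->
  (has_dimE E (dual E (Lambda f Cpub)) 1 /\
   exists h : 'rV[L]_(n - w),
     [/\ inFqm E h, rank_weight h = (n - w)%N &
         forall y, dual E (Lambda f Cpub) y <->
           exists c, c \in E /\ y = c *: (pad_left w n h *m (liftF L P)^T)])
  /\
  (forall ht : 'rV[L]_n, dual E (Lambda f Cpub) ht -> ht != 0 ->
   forall T : 'M[F]_n, T \in unitmx ->
   (exists h' : 'rV[L]_(n - w), inFqm E h' /\
        ht *m (liftF L (invmx T))^T = pad_left w n h') ->
   exists zs : 'rV[L]_w, rank_weight zs = w /\ z *m liftF L T = pad_right n zs).
Proof.
move=> G z K Ki bi Cpub B f hdim.
have hk0 : (0 < k)%N by lia.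
exact: (main_sec hEdim hLdim hkn hw1 hk0 x hgE hg hs hP hdim).
Qed.
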